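(* Let $\mathscr{A}$ be a nonempty closed set of games with $\mathscr{A}\neq\{0\}$ whose misère quotient $(\mathcal{Q},\mathcal{P})=\mathcal{Q}(\mathscr{A})$ is finite, and let $\mathcal{K}$ be the kernel of $\mathcal{Q}$. Then $\mathcal{K}\cap\mathcal{P}\neq\emptyset$.
   Context: Games are finite, loopfree impartial games identified with the finite set of their options ($0=\{\}$); disjunctive sum $G+H=\{G'+H\}\cup\{G+H'\}$. Misère outcome: $o^-(G)=\mathscr{P}$ iff $G\neq0$ and every option has outcome $\mathscr{N}$; otherwise $\mathscr{N}$. A set of games is closed if it contains all options of its members and is closed under $+$. For closed $\mathscr{A}$: $G\equiv_\mathscr{A}H$ iff $o^-(G+X)=o^-(H+X)$ for all $X\in\mathscr{A}$; $\mathcal{Q}(\mathscr{A})=(\mathcal{Q},\mathcal{P})$ is the commutative monoid of $\equiv_\mathscr{A}$-classes ($[G][H]=[G+H]$) with $\mathcal{P}$ the set of classes of misère $\mathscr{P}$-positions. For a finite commutative monoid $\mathcal{Q}$, let $z$ be the product of all idempotents ($x^2=x$) of $\mathcal{Q}$; the kernel is $\mathcal{K}=\{x\in\mathcal{Q}: x\mid z\text{ and } z\mid x\}$, where $x\mid y$ means $xw=y$ for some $w\in\mathcal{Q}$. *)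

(* Defs.v *)
(* Finite loopfree impartial games as rose trees of options. *)
From Stdlib Require Import List.
Import ListNotations.

Inductive game : Type := Node : list game -> game.

Definition options (G : game) : list game := match G with Node gs => gs end.

Definition zero : game := Node [].

Fixpoint gadd (G : game) : game -> game :=
  fix addH (H : game) : game :=
    match G, H with
    | Node gs, Node hs => Node (map (fun g => gadd g H) gs ++ map addH hs)
    end.

Fixpoint misereP (G : game) : bool :=
  match G with
  | Node gs =>
      match gs with
      | [] => false
      | _ :: _ => forallb (fun g => negb (misereP g)) gs
      end
  end.

Definition closed (A : game -> Prop) : Prop :=
  (forall G, A G -> forall G', In G' (options G) -> A G') /\
  (forall G H, A G -> A H -> A (gadd G H)).

Definition equivA (A : game -> Prop) (G H : game) : Prop :=
  forall X, A X -> misereP (gadd G X) = misereP (gadd H X).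

Definition finite_quotient (A : game -> Prop) : Prop :=
  exists s : list game, (forall G, In G s -> A G) /\
    (forall G, A G -> exists H, In H s /\ equivA A G H).

Definition divQ (A : game -> Prop) (X Y : game) : Prop :=
  exists W, A W /\ equivA A (gadd X W) Y.

Definition idemQ (A : game -> Prop) (E : game) : Prop :=
  A E /\ equivA A (gadd E E) E.

Definition gsum (L : list game) : game := fold_right gadd zero L.

(* Z represents z, the product of all idempotents of Q(A): Z is the sum of
   a list containing exactly one representative of each idempotent class. *)
Definition prod_idem (A : game -> Prop) (Z : game) : Prop :=
  exists L : list game,
    (forall E, In E L -> idemQ A E) /\
    (forall E, idemQ A E -> exists E', In E' L /\ equivA A E E') /\
    (forall i j, i < j < length L -> ~ equivA A (nth i L zero) (nth j L zero)) /\
    Z = gsum L.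

Definition in_kernel (A : game -> Prop) (G : game) : Prop :=
  A G /\ forall Z, prod_idem A Z -> divQ A G Z /\ divQ A Z G.

(* Main.v *)
Require Import Defs.
From Stdlib Require Import List.
From Stdlib Require Import List Lia Classical ClassicalDescription.
Import ListNotations.

Fixpoint game_ind' (P : game -> Prop)
  (H : forall gs, (forall g, In g gs -> P g) -> P (Node gs)) (G : game) : P G :=
  match G with
  | Node gs => H gs ((fix F (l : list game) : forall g, In g l -> P g :=
      match l with
      | [] => fun g (i : In g []) => False_ind _ i
      | x :: r => fun g i => match i with
                  | or_introl e => eq_ind x P (game_ind' P H x) g e
                  | or_intror i' => F r g i'
                  end
      end) gs)
  end.

Lemma gadd_unfold gs hs : gadd (Node gs) (Node hs) =
  Node (map (fun g => gadd g (Node hs)) gs ++ map (fun h => gadd (Node gs) h) hs).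
Proof. reflexivity. Qed.

Lemma in_opts_gadd G H o : In o (options (gadd G H)) <->
  (exists g, In g (options G) /\ o = gadd g H) \/
  (exists h, In h (options H) /\ o = gadd G h).
Proof.
  destruct G as [gs], H as [hs]. rewrite gadd_unfold. simpl.
  rewrite in_app_iff, !in_map_iff.
  split; intros [[x [E I]]|[x [E I]]]; subst; eauto.
Qed.

Inductive sim : game -> game -> Prop :=
  simN : forall gs hs,
    (forall g, In g gs -> exists h, In h hs /\ sim g h) ->
    (forall h, In h hs -> exists g, In g gs /\ sim g h) -> sim (Node gs) (Node hs).

Lemma sim_char G H : sim G H <->
  (forall g, In g (options G) -> exists h, In h (options H) /\ sim g h) /\
  (forall h, In h (options H) -> exists g, In g (options G) /\ sim g h).
Proof.
  destruct G as [gs], H as [hs]; split.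
  - intro S; inversion S; subst; auto.
  - intros [? ?]; constructor; auto.
Qed.

Lemma sim_refl G : sim G G.
Proof. induction G using game_ind'. constructor; eauto. Qed.

Lemma sim_sym G H : sim G H -> sim H G.
Proof.
  revert H; induction G as [gs IH] using game_ind'; intros H S.
  apply sim_char in S; destruct S as [S1 S2]. apply sim_char; split.
  - intros h Hh. destruct (S2 h Hh) as [g [Hg Sg]]. eauto.
  - intros g Hg. destruct (S1 g Hg) as [h [Hh Sh]]. eauto.
Qed.

Lemma sim_trans G H K : sim G H -> sim H K -> sim G K.
Proof.
  revert H K; induction G as [gs IH] using game_ind'; intros H K S T.
  apply sim_char in S; destruct S as [S1 S2].
  apply sim_char in T; destruct T as [T1 T2]. apply sim_char; split.
  - intros g Hg. destruct (S1 g Hg) as [h [Hh Sh]].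
    destruct (T1 h Hh) as [k [Hk Sk]]. eauto.
  - intros k Hk. destruct (T2 k Hk) as [h [Hh Sh]].
    destruct (S2 h Hh) as [g [Hg Sg]]. eauto.
Qed.

Lemma misereP_node gs : misereP (Node gs) = true <->
  gs <> [] /\ forall g, In g gs -> misereP g = false.
Proof.
  destruct gs as [|x r].
  - simpl. split; [discriminate | intros [[] _]; reflexivity].
  - change (misereP (Node (x :: r))) with (forallb (fun g => negb (misereP g)) (x :: r)).
    rewrite forallb_forall. split.
    + intros Hf; split; [discriminate|]. intros g Hg. specialize (Hf g Hg).
      destruct (misereP g); auto.
    + intros [_ Hf] g Hg. rewrite (Hf g Hg). reflexivity.
Qed.

Lemma misereP_opts G : misereP G = true <->
  options G <> [] /\ forall g, In g (options G) -> misereP g = false.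
Proof. destruct G; apply misereP_node. Qed.

Lemma misereP_sim G H : sim G H -> misereP G = misereP H.
Proof.
  revert H; induction G as [gs IH] using game_ind'; intros H S.
  pose proof S as S'. apply sim_char in S; destruct S as [S1 S2].
  simpl in S1, S2.
  apply Bool.eq_iff_eq_true. rewrite misereP_node, misereP_opts. split.
  - intros [Hne Hall]. split.
    + destruct gs as [|g r]; [congruence|].
      destruct (S1 g (or_introl eq_refl)) as [h [Hh _]]. intro E; rewrite E in Hh; inversion Hh.
    + intros h Hh. destruct (S2 h Hh) as [g [Hg Sg]]. rewrite <- (IH g Hg h Sg). auto.
  - intros [Hne Hall]. split.
    + intro E; subst gs. destruct (options H) as [|h r] eqn:E; [congruence|].
      destruct (S2 h (or_introl eq_refl)) as [g [[] _]].
    + intros g Hg. destruct (S1 g Hg) as [h [Hh Sh]]. rewrite (IH g Hg h Sh). auto.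
Qed.

Lemma gadd_sim G G' H H' : sim G G' -> sim H H' -> sim (gadd G H) (gadd G' H').
Proof.
  revert G' H H'; induction G as [gs IHg] using game_ind'; intros G' H.
  revert G'; induction H as [hs IHh] using game_ind'; intros G' H' SG SH.
  pose proof SG as SG'; pose proof SH as SH'.
  apply sim_char in SG; destruct SG as [A1 A2].
  apply sim_char in SH; destruct SH as [B1 B2]. simpl in A1, A2, B1, B2.
  apply sim_char; split.
  - intros o Ho. apply in_opts_gadd in Ho. destruct Ho as [[x [Hx ->]]|[x [Hx ->]]].
    + destruct (A1 x Hx) as [x' [Hx' Sx]]. exists (gadd x' H'). split.
      * apply in_opts_gadd; eauto.
      * apply IHg; auto.
    + destruct (B1 x Hx) as [x' [Hx' Sx]]. exists (gadd G' x'). split.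
      * apply in_opts_gadd; eauto.
      * apply IHh; auto.
  - intros o Ho. apply in_opts_gadd in Ho. destruct Ho as [[x [Hx ->]]|[x [Hx ->]]].
    + destruct (A2 x Hx) as [x' [Hx' Sx]]. exists (gadd x' (Node hs)). split.
      * apply in_opts_gadd; eauto.
      * apply IHg; auto.
    + destruct (B2 x Hx) as [x' [Hx' Sx]]. exists (gadd (Node gs) x'). split.
      * apply in_opts_gadd; eauto.
      * apply IHh; auto.
Qed.

Lemma gadd_comm G H : sim (gadd G H) (gadd H G).
Proof.
  revert H; induction G as [gs IHg] using game_ind'; intros H.
  induction H as [hs IHh] using game_ind'.
  apply sim_char; split.
  - intros o Ho. apply in_opts_gadd in Ho. destruct Ho as [[x [Hx ->]]|[x [Hx ->]]].
    + exists (gadd (Node hs) x). split; [apply in_opts_gadd; eauto | apply IHg; auto].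
    + exists (gadd x (Node gs)). split; [apply in_opts_gadd; eauto | apply IHh; auto].
  - intros o Ho. apply in_opts_gadd in Ho. destruct Ho as [[x [Hx ->]]|[x [Hx ->]]].
    + exists (gadd (Node gs) x). split; [apply in_opts_gadd; eauto | apply IHh; auto].
    + exists (gadd x (Node hs)). split; [apply in_opts_gadd; eauto | apply IHg; auto].
Qed.

Lemma gadd_assoc G H X : sim (gadd (gadd G H) X) (gadd G (gadd H X)).
Proof.
  revert H X; induction G as [gs IHg] using game_ind'; intros H.
  induction H as [hs IHh] using game_ind'; intros X.
  induction X as [xs IHx] using game_ind'.
  apply sim_char; split.
  - intros o Ho. apply in_opts_gadd in Ho. destruct Ho as [[y [Hy ->]]|[x [Hx ->]]].
    + apply in_opts_gadd in Hy. destruct Hy as [[g [Hg ->]]|[h [Hh ->]]].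
      * exists (gadd g (gadd (Node hs) (Node xs))). split; [apply in_opts_gadd; eauto | apply IHg; auto].
      * exists (gadd (Node gs) (gadd h (Node xs))). split; [|apply IHh; auto].
        apply in_opts_gadd; right; exists (gadd h (Node xs)); split; auto.
        apply in_opts_gadd; eauto.
    + exists (gadd (Node gs) (gadd (Node hs) x)). split; [|apply IHx; auto].
      apply in_opts_gadd; right; eexists; split; [|reflexivity]. apply in_opts_gadd; eauto.
  - intros o Ho. apply in_opts_gadd in Ho. destruct Ho as [[g [Hg ->]]|[y [Hy ->]]].
    + exists (gadd (gadd g (Node hs)) (Node xs)). split; [|apply IHg; auto].
      apply in_opts_gadd; left; eexists; split; [|reflexivity]. apply in_opts_gadd; eauto.
    + apply in_opts_gadd in Hy. destruct Hy as [[h [Hh ->]]|[x [Hx ->]]].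
      * exists (gadd (gadd (Node gs) h) (Node xs)). split; [|apply IHh; auto].
        apply in_opts_gadd; left; eexists; split; [|reflexivity]. apply in_opts_gadd; eauto.
      * exists (gadd (gadd (Node gs) (Node hs)) x). split; [|apply IHx; auto].
        apply in_opts_gadd; eauto.
Qed.

Lemma gadd_zero_l G : sim (gadd zero G) G.
Proof.
  induction G as [hs IH] using game_ind'. apply sim_char; split.
  - intros o Ho. apply in_opts_gadd in Ho. destruct Ho as [[g [[] _]]|[h [Hh ->]]].
    exists h; split; auto.
  - intros h Hh. exists (gadd zero h); split; auto. apply in_opts_gadd; eauto.
Qed.

Section Alg.
Lemma A_opt A G g : closed A -> A G -> In g (options G) -> A g.
Proof. intros [h _] HG Hg; eapply h; eauto. Qed.
Lemma A_add A G H : closed A -> A G -> A H -> A (gadd G H).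
Proof. intros [_ h]; auto. Qed.
Lemma A_zero A G : closed A -> A G -> A zero.
Proof.
  intros hc; induction G as [gs IH] using game_ind'; intros HG.
  destruct gs as [|g r]; [exact HG|]. apply (IH g (or_introl eq_refl)).
  eapply A_opt; eauto; simpl; auto.
Qed.

Lemma eqv_refl A G : equivA A G G.
Proof. intros X _; reflexivity. Qed.
Lemma eqv_sym A G H : equivA A G H -> equivA A H G.
Proof. intros h X HX; symmetry; auto. Qed.
Lemma eqv_trans A G H K : equivA A G H -> equivA A H K -> equivA A G K.
Proof. intros h1 h2 X HX; rewrite (h1 X HX); auto. Qed.
Lemma sim_eqv A G H : sim G H -> equivA A G H.
Proof. intros S X _; apply misereP_sim, gadd_sim; auto using sim_refl. Qed.
Lemma eqv_comm A G H : equivA A (gadd G H) (gadd H G).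
Proof. apply sim_eqv, gadd_comm. Qed.
Lemma eqv_assoc A G H X : equivA A (gadd (gadd G H) X) (gadd G (gadd H X)).
Proof. apply sim_eqv, gadd_assoc. Qed.
Lemma eqv_cong_r A G H K : closed A -> equivA A G H -> A K -> equivA A (gadd G K) (gadd H K).
Proof.
  intros hc e HK X HX.
  rewrite (misereP_sim _ _ (gadd_assoc G K X)), (misereP_sim _ _ (gadd_assoc H K X)).
  apply e, A_add; auto.
Qed.
Lemma eqv_cong_l A G H K : closed A -> equivA A G H -> A K -> equivA A (gadd K G) (gadd K H).
Proof.
  intros hc e HK. eapply eqv_trans; [apply eqv_comm|].
  eapply eqv_trans; [apply eqv_cong_r; eauto|apply eqv_comm].
Qed.
End Alg.

Lemma A_gsum A L : closed A -> A zero -> (forall E, In E L -> A E) -> A (gsum L).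
Proof.
  intros hc hz; induction L as [|x r IH]; simpl; intros HL; auto.
  apply A_add; auto.
Qed.

Lemma in_absorb A L E : closed A -> A zero -> (forall x, In x L -> idemQ A x) -> In E L ->
  equivA A (gadd E (gsum L)) (gsum L).
Proof.
  intros hc hz; induction L as [|x r IH]; simpl; intros HL Hin; [destruct Hin|].
  assert (Ar : A (gsum r)) by (apply A_gsum; auto; intros; apply HL; auto).
  assert (Ax : A x) by (apply HL; auto).
  destruct Hin as [<-|Hin].
  - eapply eqv_trans; [apply eqv_sym, eqv_assoc|]. apply eqv_cong_r; auto. apply HL; auto.
  - eapply eqv_trans; [apply eqv_sym, eqv_assoc|].
    eapply eqv_trans; [apply eqv_cong_r; [auto|apply eqv_comm|auto]|].
    eapply eqv_trans; [apply eqv_assoc|]. apply eqv_cong_l; auto.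
Qed.

Lemma absorb A L E : closed A -> A zero -> (forall x, In x L -> idemQ A x) ->
  (forall E, idemQ A E -> exists E', In E' L /\ equivA A E E') -> idemQ A E ->
  equivA A (gadd E (gsum L)) (gsum L).
Proof.
  intros hc hz HL Hc HE. destruct (Hc E HE) as [E' [HE' e]].
  eapply eqv_trans; [apply eqv_cong_r; eauto|].
  - apply A_gsum; auto. intros; apply HL; auto.
  - apply in_absorb; auto.
Qed.

Lemma prod_idem_uniq A Z1 Z2 : closed A -> A zero -> prod_idem A Z1 -> prod_idem A Z2 ->
  equivA A Z1 Z2.
Proof.
  intros hc hz [L1 [I1 [C1 [_ ->]]]] [L2 [I2 [C2 [_ ->]]]].
  assert (AL1 : A (gsum L1)) by (apply A_gsum; auto; intros; apply I1; auto).
  assert (AL2 : A (gsum L2)) by (apply A_gsum; auto; intros; apply I2; auto).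
  assert (K : forall L, (forall x, In x L -> idemQ A x) -> equivA A (gadd (gsum L) (gsum L1)) (gsum L1)).
  { induction L as [|x r IH]; simpl; intros HL.
    - apply sim_eqv, gadd_zero_l.
    - eapply eqv_trans; [apply eqv_assoc|].
      eapply eqv_trans; [apply eqv_cong_l; [auto|apply IH; auto|apply HL; auto]|].
      apply absorb; auto. }
  assert (K' : forall L, (forall x, In x L -> idemQ A x) -> equivA A (gadd (gsum L) (gsum L2)) (gsum L2)).
  { induction L as [|x r IH]; simpl; intros HL.
    - apply sim_eqv, gadd_zero_l.
    - eapply eqv_trans; [apply eqv_assoc|].
      eapply eqv_trans; [apply eqv_cong_l; [auto|apply IH; auto|apply HL; auto]|].
      apply absorb; auto. }
  eapply eqv_trans; [apply eqv_sym, (K L2 I2)|].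
  eapply eqv_trans; [apply eqv_comm|]. apply K'; auto.
Qed.

Fixpoint pw (Y : game) (n : nat) : game :=
  match n with 0 => zero | S n => gadd Y (pw Y n) end.

Lemma A_pw A Y n : closed A -> A zero -> A Y -> A (pw Y n).
Proof. intros hc hz hY; induction n; simpl; [exact hz|apply A_add; auto]. Qed.

Lemma pw_add A Y a b : closed A -> A Y -> equivA A (pw Y (a + b)) (gadd (pw Y a) (pw Y b)).
Proof.
  intros hc HY; induction a; simpl.
  - apply eqv_sym, sim_eqv, gadd_zero_l.
  - eapply eqv_trans; [apply eqv_cong_l; eauto|]. apply eqv_sym, eqv_assoc.
Qed.

Lemma PH A s : forall f : nat -> game,
  (forall i, exists h, In h s /\ equivA A (f i) h) -> exists i j, i < j /\ equivA A (f i) (f j).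
Proof.
  induction s as [|a r IH]; intros f Hf.
  - destruct (Hf 0) as [h [[] _]].
  - destruct (classic (exists i j, i < j /\ equivA A (f i) a /\ equivA A (f j) a)) as
      [[i [j [lt [e1 e2]]]]|N1].
    + exists i, j; split; auto. eapply eqv_trans; eauto using eqv_sym.
    + destruct (classic (exists i, equivA A (f i) a)) as [[i0 e0]|N2].
      * destruct (IH (fun k => f (i0 + S k))) as [i [j [lt e]]].
        { intros k. destruct (Hf (i0 + S k)) as [h [[<-|Hh] e]]; eauto.
          exfalso; apply N1; exists i0, (i0 + S k); repeat split; auto; lia. }
        exists (i0 + S i), (i0 + S j); split; auto; lia.
      * apply IH. intros k. destruct (Hf k) as [h [[<-|Hh] e]]; eauto.
        exfalso; apply N2; eauto.
Qed.

Lemma idem_pow A Y : closed A -> A zero -> finite_quotient A -> A Y ->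
  exists N, 1 <= N /\ idemQ A (pw Y N).
Proof.
  intros hc hz [s [Hs1 Hs2]] HY.
  destruct (PH A s (fun i => pw Y (S i))) as [i [j [lt e]]].
  { intros i; destruct (Hs2 (pw Y (S i))) as [h [Hh e]]; eauto. apply A_pw; auto. }
  set (m := S i) in e. set (p := j - i).
  assert (e' : equivA A (pw Y m) (pw Y (m + p))) by (replace (m + p) with (S j) by (unfold m, p; lia); exact e).
  assert (P : forall t, equivA A (pw Y (m + t)) (pw Y (m + t + p))).
  { intros t. eapply eqv_trans; [apply pw_add; auto|].
    eapply eqv_trans; [apply eqv_cong_r; [auto|exact e'|apply A_pw; auto]|].
    replace (m + t + p) with (m + p + t) by lia. apply eqv_sym, pw_add; auto. }
  assert (Q : forall t k, equivA A (pw Y (m + t)) (pw Y (m + t + k * p))).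
  { intros t k; induction k.
    - replace (m + t + 0 * p) with (m + t) by lia. apply eqv_refl.
    - eapply eqv_trans; [exact IHk|].
      replace (m + t + S k * p) with (m + (t + k * p) + p) by nia.
      replace (m + t + k * p) with (m + (t + k * p)) by lia. apply P. }
  assert (Hp : 1 <= p) by (unfold p; lia).
  assert (Hm : 1 <= m) by (unfold m; lia).
  assert (Hmp : m <= m * p) by nia.
  clearbody m p.
  exists (m * p). split; [nia|]. split; [apply A_pw; auto|].
  eapply eqv_trans; [apply eqv_sym, pw_add; auto|].
  pose proof (Q (m * p - m) m) as q.
  replace (m + (m * p - m)) with (m * p) in q by lia.
  apply eqv_sym. exact q.
Qed.

Definition dec (P : Prop) : bool := if excluded_middle_informative P then true else false.
Lemma dec_true P : dec P = true <-> P.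
Proof. unfold dec; destruct (excluded_middle_informative P); split; auto; discriminate. Qed.

Fixpoint dd A (l : list game) : list game :=
  match l with
  | [] => []
  | x :: r => if dec (exists y, In y r /\ equivA A x y) then dd A r else x :: dd A r
  end.

Lemma dd_sub A l x : In x (dd A l) -> In x l.
Proof.
  induction l as [|a r IH]; simpl; auto.
  destruct (dec _); simpl; intuition.
Qed.

Lemma dd_cover A l x : In x l -> exists y, In y (dd A l) /\ equivA A x y.
Proof.
  revert x; induction l as [|a r IH]; intros x; simpl; [intros []|].
  destruct (dec (exists y, In y r /\ equivA A a y)) eqn:E; intros [<-|H].
  - apply (proj1 (dec_true _)) in E. destruct E as [y [Hy e]]. destruct (IH y Hy) as [z [Hz e2]].
    exists z; split; auto. eapply eqv_trans; eauto.
  - auto.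
  - exists a; split; simpl; auto. apply eqv_refl.
  - destruct (IH x H) as [z [Hz e]]. exists z; simpl; auto.
Qed.

Lemma dd_pw A l : forall i j, i < j < length (dd A l) ->
  ~ equivA A (nth i (dd A l) zero) (nth j (dd A l) zero).
Proof.
  induction l as [|a r IH]; simpl; [intros; lia|].
  destruct (dec (exists y, In y r /\ equivA A a y)) eqn:E; auto.
  intros i j [l1 l2]. simpl in l2. destruct i, j; try lia; simpl.
  - intros e. assert (E' : dec (exists y, In y r /\ equivA A a y) = true).
    { apply dec_true. exists (nth j (dd A r) zero). split; auto.
      apply (dd_sub A). apply nth_In; lia. }
    congruence.
  - apply IH; lia.
Qed.

Lemma prod_idem_A A Z : closed A -> A zero -> prod_idem A Z -> A Z.
Proof.
  intros hc hz [L [I [_ [_ ->]]]]. apply A_gsum; auto. intros; apply I; auto.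
Qed.

Lemma kernel_add A Z0 Y : closed A -> A zero -> finite_quotient A -> prod_idem A Z0 -> A Y ->
  in_kernel A (gadd Z0 Y).
Proof.
  intros hc hz hf HZ0 HY.
  pose proof (prod_idem_A A Z0 hc hz HZ0) as AZ0.
  split; [apply A_add; auto|]. intros Z HZ.
  pose proof (prod_idem_uniq A Z0 Z hc hz HZ0 HZ) as e.
  split.
  - destruct (idem_pow A Y hc hz hf HY) as [N [HN Hi]].
    exists (pw Y (N - 1)). split; [apply A_pw; auto|].
    eapply eqv_trans; [apply eqv_assoc|].
    replace N with (S (N - 1)) in Hi by lia. simpl in Hi.
    eapply eqv_trans; [apply eqv_comm|].
    eapply eqv_trans; [|exact e].
    destruct HZ0 as [L [I [C [_ ->]]]]. apply absorb; auto.
  - exists Y; split; auto. apply eqv_cong_r; auto. apply eqv_sym; auto.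
Qed.

Lemma star A G : closed A -> A G -> G <> zero -> exists S, A S /\ misereP S = true.
Proof.
  intros hc; induction G as [gs IH] using game_ind'; intros HG Hne.
  destruct (classic (exists g, In g gs /\ g <> zero)) as [[g [Hg Hgz]]|N].
  - apply (IH g Hg); auto. eapply A_opt; eauto.
  - exists (Node gs); split; auto. apply misereP_node. split.
    + intros ->; apply Hne; reflexivity.
    + intros g Hg. destruct (classic (g = zero)) as [->|h]; [reflexivity|].
      exfalso; eauto.
Qed.

Theorem mainTheorem20 (A : game -> Prop) :
  closed A ->
  (exists G, A G) ->
  ~ (forall G, A G <-> G = zero) ->
  finite_quotient A ->
  (exists Z, prod_idem A Z) /\
  (exists G, in_kernel A G /\ misereP G = true).
Proof.
  intros hc [G0 HG0] Hne hf.
  assert (hz : A zero) by (eapply A_zero; eauto).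
  assert (HP : exists Z, prod_idem A Z).
  { destruct hf as [s [Hs1 Hs2]].
    exists (gsum (dd A (filter (fun x => dec (idemQ A x)) s))).
    eexists; split; [|split; [|split; [|reflexivity]]].
    - intros E HE. apply dd_sub, filter_In in HE. destruct HE as [_ HE].
      apply (proj1 (dec_true _)); auto.
    - intros E HE. destruct (Hs2 E (proj1 HE)) as [H [Hs e]].
      assert (HH : idemQ A H).
      { split; [auto|]. apply eqv_sym in e.
        eapply eqv_trans; [apply eqv_cong_r; [auto|exact e|auto]|].
        eapply eqv_trans; [apply eqv_cong_l; [auto|exact e|apply HE]|].
        eapply eqv_trans; [apply HE|]. apply eqv_sym; auto. }
      destruct (dd_cover A (filter (fun x => dec (idemQ A x)) s) H) as [E' [HE' e']].
      + apply filter_In; split; auto. apply (proj2 (dec_true _)); auto.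
      + exists E'; split; auto. eapply eqv_trans; eauto.
    - apply dd_pw. }
  split; [exact HP|].
  destruct HP as [Z0 HZ0].
  assert (AZ0 : A Z0) by (apply prod_idem_A; auto).
  destruct Z0 as [zs] eqn:EZ. destruct zs as [|z r].
  - assert (exists G, A G /\ G <> zero) as [G [HG Gz]].
    { apply NNPP; intro N. apply Hne. intros G; split; intros H.
      - apply NNPP; intro N2; apply N; eauto.
      - subst; auto. }
    destruct (star A G hc HG Gz) as [S [HS mS]].
    exists (gadd (Node []) S). split; [apply kernel_add; auto|].
    change (Node []) with zero; rewrite (misereP_sim _ _ (gadd_zero_l S)); auto.
  - rewrite <- EZ in *. destruct (misereP (gadd Z0 Z0)) eqn:T.
    + exists (gadd Z0 Z0); split; auto. apply kernel_add; auto.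
    + assert (exists o, In o (options (gadd Z0 Z0)) /\ misereP o = true) as [o [Ho mo]].
      { apply NNPP; intro N. assert (misereP (gadd Z0 Z0) = true); [|congruence].
        apply misereP_opts; split.
        - intro E. assert (In (gadd z Z0) (options (gadd Z0 Z0))).
          { apply in_opts_gadd; left; exists z; rewrite EZ; simpl; auto. }
          rewrite E in H; destruct H.
        - intros g Hg. destruct (misereP g) eqn:Eg; auto. exfalso; eauto. }
      apply in_opts_gadd in Ho. destruct Ho as [[g [Hg ->]]|[h [Hh ->]]].
      * exists (gadd Z0 g). split; [apply kernel_add; auto; eapply A_opt; eauto|].
        rewrite (misereP_sim _ _ (gadd_comm Z0 g)); auto.
      * exists (gadd Z0 h). split; auto. apply kernel_add; auto. eapply A_opt; eauto.
Qed.
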